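(* Let $t$ be an $\mathrm{SL}_2$-tiling and $i<j$ integers. Then $c_{ij}$ and $d_{ij}$ are positive integers.
   Context: An $\mathrm{SL}_2$-tiling is a map $t:\mathbb{Z}\times\mathbb{Z}\to\{1,2,3,\dots\}$, $(i,j)\mapsto t_{ij}$, with $t_{ij}t_{i+1,j+1}-t_{i,j+1}t_{i+1,j}=1$ for all $i,j$. For integers $i<j$ and any integer $a$ put $c_{ij}=t_{ia}t_{j,a+1}-t_{i,a+1}t_{ja}$ and $d_{ij}=t_{ai}t_{a+1,j}-t_{aj}t_{a+1,i}$; these values do not depend on the choice of $a$ (a known fact about $\mathrm{SL}_2$-tilings). *)

(* Defs.v *)
From Stdlib Require Import ZArith.
Open Scope Z_scope.

Definition is_SL2_tiling (t : Z -> Z -> Z) : Prop :=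
  (forall i j, 1 <= t i j) /\
  (forall i j, t i j * t (i+1) (j+1) - t i (j+1) * t (i+1) j = 1).

(* c_{ij} computed with the auxiliary column a *)
Definition c_at (t : Z -> Z -> Z) (i j a : Z) : Z :=
  t i a * t j (a+1) - t i (a+1) * t j a.

(* d_{ij} computed with the auxiliary row a *)
Definition d_at (t : Z -> Z -> Z) (i j a : Z) : Z :=
  t a i * t (a+1) j - t a j * t (a+1) i.

(* Main.v *)
Require Import Defs.
From Stdlib Require Import ZArith Lia.
Open Scope Z_scope.

Lemma slope_mono (x y : Z -> Z) :
  (forall k, 0 < x k) ->
  (forall k, 0 < x k * y (k+1) - y k * x (k+1)) ->
  forall i (n : nat), 0 < x i * y (i + Z.of_nat n + 1) - y i * x (i + Z.of_nat n + 1).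
Proof.
  intros Hx Hd i n. induction n as [|n IH].
  - simpl. replace (i + 0 + 1) with (i + 1) by lia. apply Hd.
  - set (j := i + Z.of_nat n + 1) in *.
    replace (i + Z.of_nat (S n) + 1) with (j + 1) by (subst j; lia).
    pose proof (Hd j) as Hj. pose proof (Hx j). pose proof (Hx i). pose proof (Hx (j+1)).
    assert (E : x j * (x i * y (j+1) - y i * x (j+1)) =
      (x i * y j - y i * x j) * x (j+1) + (x j * y (j+1) - y j * x (j+1)) * x i) by ring.
    nia.
Qed.

Lemma slope_mono' (x y : Z -> Z) :
  (forall k, 0 < x k) ->
  (forall k, 0 < x k * y (k+1) - y k * x (k+1)) ->
  forall i j, i < j -> 0 < x i * y j - y i * x j.
Proof.
  intros Hx Hd i j Hij.
  replace j with (i + Z.of_nat (Z.to_nat (j - i - 1)) + 1) by lia.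
  apply slope_mono; auto.
Qed.

Theorem proposition5p6 (t : Z -> Z -> Z) (i j : Z) :
  is_SL2_tiling t -> i < j ->
  forall a : Z, 0 < c_at t i j a /\ 0 < d_at t i j a.
Proof.
  intros [Hpos Hdet] Hij a. split.
  - unfold c_at.
    apply (slope_mono' (fun k => t k a) (fun k => t k (a+1))); auto;
    intros k; cbv beta; [pose proof (Hpos k a); lia | pose proof (Hdet k a); lia].
  - unfold d_at.
    pose proof (slope_mono' (fun k => t a k) (fun k => t (a+1) k)) as H.
    cbn beta in H.
    assert (0 < t a i * t (a + 1) j - t (a + 1) i * t a j).
    { apply H; auto; intros k; [pose proof (Hpos a k); lia | pose proof (Hdet a k); lia]. }
    lia.
Qed.
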